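(* Let $1\le k\le n$ be integers and $\eta=k/n$. For $\mu'\in\mathbb R$ let $P_{\mu'}=\mathcal N(\mu',1)^{\otimes n}$, and for $\delta\ge0$ let $Q_{\mu',\delta}$ be the law of $X+\delta e_I$, where $X\sim P_{\mu'}$, $I\subseteq[n]$ is a uniformly random subset of size $k$ independent of $X$, and $e_I\in\{0,1\}^n$ is the indicator vector of $I$. Then for every $\mu'\in\mathbb R$ and $\delta\ge0$, \[\chi^2(Q_{\mu',\delta}\,\|\,P_{\mu'+\eta\delta})\le\exp\!\Big(\frac{k^2}{n}\big(e^{\delta^2}-1-\delta^2\big)\Big)-1.\]
   Context: For probability measures $Q\ll P$, $\chi^2(Q\|P)=\mathbb E_P\big[(\frac{dQ}{dP}-1)^2\big]$. *)

(* Defs.v *)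
From HB Require Import structures.
From mathcomp Require Import all_boot all_order all_algebra.
From mathcomp Require Import all_classical all_reals all_analysis.

Set Implicit Arguments.
Unset Strict Implicit.
Unset Printing Implicit Defensive.

Import Order.TTheory GRing.Theory Num.Theory.
Local Open Scope ring_scope.

Section Defs.
Context {R : realType}.

(* Points of R^n are represented as x : nat -> R; only coordinates 0..n-1 matter. *)

(* Expectation of a nonnegative functional g under P_mu = N(mu,1)^{(x) n}:
   the n coordinates are integrated one after the other against the
   library's normal probability measure N(mu,1) (independent coordinates;
   by Tonelli this equals the integral against the product measure). *)
Fixpoint gauss_prod_expect (mu : R) (n : nat) (g : (nat -> R) -> \bar R)
    : \bar R :=
  match n with
  | 0 => g (fun _ => 0)
  | m.+1 => (\int[normal_prob mu 1]_(t in [set: R])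
               gauss_prod_expect mu m
                 (fun x => g (fun i => if i == m then t else x i)))%E
  end.

Definition gauss_prod_pdf (n : nat) (mu : R) (x : nat -> R) : R :=
  \prod_(i < n) normal_pdf mu 1 (x i).

(* Lebesgue density on R^n of Q_{mu,delta} = law of X + delta e_I with
   X ~ P_mu and I uniform among the k-subsets of [n], independent of X:
   a uniform mixture over I of the Gaussians N(mu 1 + delta e_I, Id). *)
Definition planted_pdf (n k : nat) (mu delta : R) (x : nat -> R) : R :=
  ('C(n, k)%:R)^-1 *
  \sum_(I : {set 'I_n} | #|I| == k)
     \prod_(i < n) normal_pdf (mu + delta * (i \in I)%:R) 1 (x i).

(* chi^2(Q || P_mu) = E_{P_mu}[(dQ/dP_mu - 1)^2] for a law Q on R^n with
   Lebesgue density q; dQ/dP_mu = q / p_mu (p_mu > 0 everywhere). *)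
Definition chi2_gauss_prod (n : nat) (q : (nat -> R) -> R) (mu : R) : \bar R :=
  gauss_prod_expect mu n
    (fun x => ((q x / gauss_prod_pdf n mu x - 1) ^+ 2)%:E).

End Defs.

(* Main.v *)
Require Import Defs.
From HB Require Import structures.
From mathcomp Require Import all_boot all_order all_algebra.
From mathcomp Require Import all_classical all_reals all_analysis.
From mathcomp Require Import measurable_realfun charge.
From mathcomp Require Import ring lra zify.
Import Order.TTheory GRing.Theory Num.Theory.
Local Open Scope ring_scope.

Section S.
Context {R : realType}.
Local Notation mu := (@lebesgue_measure R).

Lemma pdf1E (a t : R) : normal_pdf a 1 t =
  normal_peak 1 * expR (- (t - a) ^+ 2 / 2).
Proof. by rewrite normal_pdfE ?oner_neq0// /normal_fun expr1n. Qed.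

Lemma pdf_gt0 (a t : R) : 0 < normal_pdf a 1 t.
Proof. by rewrite pdf1E mulr_gt0 ?expR_gt0// normal_peak_gt0 ?oner_neq0. Qed.

Definition ell (a c t : R) := normal_pdf a 1 t / normal_pdf c 1 t.

Lemma ellE a c t : ell a c t = expR ((a - c) * (t - c) - (a - c) ^+ 2 / 2).
Proof.
rewrite /ell !pdf1E invfM mulrACA divff ?gt_eqF ?normal_peak_gt0 ?oner_neq0// mul1r.
rewrite -expRN -expRD; congr expR; by field.
Qed.

Lemma ell_ge0 a c t : 0 <= ell a c t.
Proof. by rewrite ellE expR_ge0. Qed.

Lemma ellcc c t : ell c c t = 1.
Proof. by rewrite ellE subrr !mul0r expr0n /= mul0r subrr expR0. Qed.

Lemma measurable_ell a c : measurable_fun setT (ell a c).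
Proof.
rewrite (_ : ell a c = (fun t => expR ((a - c) * (t - c) - (a - c) ^+ 2 / 2))).
  apply: measurableT_comp => //.
  apply: measurable_funB => //; apply: measurable_funM => //.
  exact: measurable_funB.
by apply/funext => t; rewrite ellE.
Qed.

Lemma ell_ell_pdf a b c t : ell a c t * ell b c t * normal_pdf c 1 t =
  expR ((a - c) * (b - c)) * normal_pdf (a + b - c) 1 t.
Proof.
rewrite !ellE !pdf1E -!expRD [RHS]mulrCA -expRD mulrCA -expRD; congr (_ * expR _); by field.
Qed.

Local Open Scope ereal_scope.
Lemma normal_ge0_integral (c : R) (g : R -> \bar R) :
  (forall x, 0 <= g x) -> measurable_fun setT g ->
  \int[normal_prob c 1]_x g x = \int[mu]_x (g x * (normal_pdf c 1 x)%:E).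
Proof.
move=> g0 mg.
have dom := normal_prob_dominates c 1.
rewrite -(Radon_Nikodym_SigmaFinite.change_of_variables dom)//.
apply: ae_eq_integral => //.
- apply: emeasurable_funM => //.
  exact: measurable_int (Radon_Nikodym_SigmaFinite.f_integrable dom).
- apply: emeasurable_funM => //; apply/measurable_EFinP.
  exact: measurable_normal_pdf.
- apply: ae_eqe_mul2l => /=.
  apply: integral_ae_eq => //.
  + exact: Radon_Nikodym_SigmaFinite.f_integrable.
  + apply/measurable_EFinP; exact: measurable_normal_pdf.
  + move=> E _ mE; rewrite -Radon_Nikodym_SigmaFinite.f_integral//.
Qed.

Lemma measurable_ell2 a b c :
  measurable_fun setT (fun t => (ell a c t * ell b c t)%:E).
Proof.
by apply/measurable_EFinP; apply: measurable_funM; exact: measurable_ell.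
Qed.

Lemma integral_ell2 a b c :
  \int[normal_prob c 1]_t (ell a c t * ell b c t)%:E =
  (expR ((a - c) * (b - c)))%:E.
Proof.
rewrite normal_ge0_integral; last exact: measurable_ell2.
  under eq_integral do rewrite -EFinM ell_ell_pdf EFinM.
  rewrite integralZl//; last exact: integrable_normal_pdf.
  by rewrite integral_normal_pdf mule1.
by move=> t; rewrite lee_fin mulr_ge0 ?ell_ge0.
Qed.

Lemma integrable_ell2 a b c :
  (normal_prob c 1).-integrable setT (fun t => (ell a c t * ell b c t)%:E).
Proof.
apply/integrableP; split; first exact: measurable_ell2.
rewrite (_ : (fun x => _) = (fun t => (ell a c t * ell b c t)%:E)); last first.
  by apply/funext => t; rewrite gee0_abs// lee_fin mulr_ge0 ?ell_ge0.
by rewrite integral_ell2 ltry.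
Qed.


Lemma gpe_ext c n (g h : (nat -> R) -> \bar R) : (forall x, g x = h x) ->
  gauss_prod_expect c n g = gauss_prod_expect c n h.
Proof. by move=> gh; congr gauss_prod_expect; apply/funext. Qed.

Lemma gpe_comb (c : R) (J : finType) (n : nat) (k : J -> R)
    (a b : J -> nat -> R) :
  gauss_prod_expect c n (fun x => (\sum_j k j *
     \prod_(i < n) (ell (a j i) c (x i) * ell (b j i) c (x i)))%:E)
  = (\sum_j k j * \prod_(i < n) expR ((a j i - c) * (b j i - c)))%:E.
Proof.
elim: n k => [|m IH] k /=.
  by congr EFin; apply: eq_bigr => j _; rewrite !big_ord0.
transitivity (\int[normal_prob c 1]_(t in [set: R])
   (\sum_j (k j * \prod_(i < m) expR ((a j i - c) * (b j i - c)))%:E *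
      (ell (a j m) c t * ell (b j m) c t)%:E)).
  apply: eq_integral => t _.
  rewrite (@gpe_ext _ _ _ (fun x => (\sum_j (k j * (ell (a j m) c t * ell (b j m) c t)) *
     \prod_(i < m) (ell (a j i) c (x i) * ell (b j i) c (x i)))%:E)).
    rewrite IH sumEFin; congr EFin; apply: eq_bigr => j _.
    ring.
  move=> x; congr EFin; apply: eq_bigr => j _.
  rewrite big_ord_recr /= eqxx.
  rewrite (eq_bigr (fun i : 'I_m => ell (a j i) c (x i) * ell (b j i) c (x i)))%R.
    by ring.
  by move=> i _; rewrite /= ltn_eqF.
rewrite integral_sum//; last first.
  by move=> j; apply: integrableZl => //; exact: integrable_ell2.
rewrite -sumEFin; apply: eq_bigr => j _.
rewrite integralZl//; last exact: integrable_ell2.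
by rewrite integral_ell2 -EFinM big_ord_recr /= mulrA.
Qed.

End S.

Section C.
Variable R : realFieldType.
Variable T : finType.

Lemma sum_sub_pow (A : {set T}) (x : R) :
  \sum_(S : {set T} | S \subset A) x ^+ #|S| = (1 + x) ^+ #|A|.
Proof.
have hc (S : {set T}) : (#|S| < #|T|.+1)%N by rewrite ltnS max_card.
rewrite (partition_big (fun S : {set T} => (inord #|S| : 'I_#|T|.+1)) xpredT) //=.
rewrite (eq_bigr (fun s : 'I_#|T|.+1 => x ^+ s *+ 'C(#|A|, s))); last first.
  move=> s _.
  rewrite (eq_bigr (fun _ => x ^+ s)); last first.
    by move=> S /andP[_ /eqP Hs]; rewrite -Hs inordK.
  transitivity (\sum_(S in [set S : {set T} | (S \subset A) && (#|S| == s)]) x ^+ s).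
    apply: eq_bigl => S; rewrite !inE; congr (_ && _).
    apply/eqP/eqP => [<-|h]; first by rewrite inordK.
    by apply: val_inj; rewrite /= inordK // h.
  by rewrite sumr_const cards_draws.
rewrite addrC exprD1n.
rewrite -(big_mkord xpredT (fun s => x ^+ s *+ 'C(#|A|, s))).
rewrite -(big_mkord xpredT (fun s => x ^+ s *+ 'C(#|A|, s))).
rewrite (big_cat_nat _ (n := #|A|.+1)) //=.
rewrite [X in _ + X]big1_seq ?addr0 // => s /andP[_].
by rewrite mem_index_iota => /andP[hs _]; rewrite bin_small.
Qed.


Lemma bin_shift_bound (N k s : nat) : (k <= N)%N -> (s <= k)%N ->
  ('C(N - s, k - s)%:R : R) <= (k%:R / N%:R) ^+ s * 'C(N, k)%:R.
Proof.
move=> hkN; elim: s => [|s IH] hs; first by rewrite !subn0 expr0 mul1r.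
have hsk : (s < k)%N by [].
have IH' := IH (ltnW hs).
have key : ((N - s)%:R * 'C(N - s.+1, k - s.+1)%:R : R) =
    (k - s)%:R * 'C(N - s, k - s)%:R.
  rewrite -!natrM; congr _%:R.
  have := mul_bin_diag (N - s) (k - s.+1).
  have -> : (N - s).-1 = (N - s.+1)%N by rewrite subnS.
  by have -> : (k - s.+1).+1 = (k - s)%N by lia.
have N0 : (0 < N)%N by lia.
set z := k%:R / N%:R.
have hz : z * N%:R = k%:R by rewrite /z divfK // pnatr_eq0 -lt0n.
have z1 : z <= 1 by rewrite /z ler_pdivrMr ?ltr0n // mul1r ler_nat.
have z0 : 0 <= z by rewrite /z divr_ge0.
set P := z ^+ s * 'C(N, k)%:R.
have P0 : 0 <= P by rewrite /P mulr_ge0 // exprn_ge0.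
rewrite exprSr -mulrA.
have hNs : (0 : R) < (N - s)%:R by rewrite ltr0n; lia.
rewrite -(ler_pM2l hNs) key.
have -> : z ^+ s * (z * 'C(N, k)%:R) = z * P by rewrite /P; ring.
rewrite !natrB; [|lia|lia].
rewrite -hz.
have hs0 : (0 : R) <= s%:R by [].
have hks : (s%:R : R) <= z * N%:R by rewrite hz ler_nat ltnW.
have b0 : (0 : R) <= 'C(N - s, k - s)%:R by [].
have IHP : 'C(N - s, k - s)%:R <= P by [].
have sP0 : (0 : R) <= s%:R * P by rewrite mulr_ge0.
apply: (@le_trans _ _ ((z * N%:R - s%:R) * P)).
  by rewrite ler_wpM2l // subr_ge0.
have : (0 : R) <= (1 - z) * (s%:R * P) by rewrite mulr_ge0 // subr_ge0.
nra.
Qed.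


Lemma count_sup_bound (S : {set T}) (k : nat) : (k <= #|T|)%N ->
  (#|[set I : {set T} | (#|I| == k) && (S \subset I)]|%:R : R) <=
  (k%:R / #|T|%:R) ^+ #|S| * 'C(#|T|, k)%:R.
Proof.
move=> hk; set D := [set I : {set T} | _].
have [hs|hs] := leqP #|S| k; last first.
  have -> : D = finset.set0.
    apply/setP => I; rewrite !inE; apply/negbTE/negP => /andP[/eqP hI hSI].
    by have := subset_leq_card hSI; rewrite hI leqNgt hs.
  by rewrite cards0 mulr_ge0 // exprn_ge0 // divr_ge0.
apply: (@le_trans _ _ ('C(#|T| - #|S|, k - #|S|)%:R)); last exact: bin_shift_bound.
rewrite ler_nat.
rewrite -(@card_in_imset _ _ (fun I => I :\: S)); last first.
  move=> I1 I2; rewrite !inE => /andP[_ h1] /andP[_ h2] e.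
  apply/setP => x; have [xS|xS] := boolP (x \in S).
    by rewrite (fintype.subsetP h1 x xS) (fintype.subsetP h2 x xS).
  by have := congr1 (fun A : {set T} => x \in A) e; rewrite /= !inE xS.
have -> : (#|T| - #|S| = #|~: S|)%N by rewrite -(cardsC S); lia.
rewrite -cards_draws; apply: subset_leq_card; apply/fintype.subsetP => A /imsetP[I].
rewrite !inE => /andP[/eqP hI hSI] ->; apply/andP; split.
  by rewrite finset.setDE finset.subsetIr.
by rewrite cardsD hI (finset.setIidPr hSI).
Qed.


Lemma sum_cond (I : finType) (P : pred I) (F : I -> R) :
  \sum_(i | P i) F i = \sum_i (P i)%:R * F i.
Proof.
rewrite big_mkcond; apply: eq_bigr => i _.
by case: (P i); rewrite ?mul1r ?mul0r.
Qed.

Lemma sum_ind_card (I : finType) (P : pred I) :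
  \sum_i ((P i)%:R : R) = #|[set i | P i]|%:R.
Proof.
rewrite -sumr_const; under eq_bigr do rewrite -[(P _)%:R]mulr1.
by rewrite -sum_cond; apply: eq_bigl => i; rewrite inE.
Qed.

Lemma natr_andb (a b : bool) : ((a && b)%:R : R) = a%:R * b%:R.
Proof. by case: a; case: b; rewrite ?mul1r ?mul0r. Qed.

Lemma overlap_bound (k : nat) (u : R) : (k <= #|T|)%N -> 0 <= u ->
  \sum_(I : {set T} | #|I| == k) \sum_(J : {set T} | #|J| == k)
      (1 + u) ^+ #|I :&: J|
  <= 'C(#|T|, k)%:R ^+ 2 * (1 + u * (k%:R / #|T|%:R)) ^+ k.
Proof.
move=> hk u0.
set z := k%:R / #|T|%:R.
set C := 'C(#|T|, k)%:R.
pose M (S : {set T}) : R :=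
  \sum_(I : {set T}) ((#|I| == k) && (S \subset I))%:R.
have hC : \sum_(I : {set T}) ((#|I| == k)%:R : R) = C.
  by rewrite sum_ind_card card_draws.
have hM S : M S <= z ^+ #|S| * C.
  by rewrite /M sum_ind_card count_sup_bound.
have M0 S : 0 <= M S by rewrite /M sumr_ge0.
have z0 : 0 <= z by rewrite divr_ge0.
have step1 : \sum_(I : {set T} | #|I| == k) \sum_(J : {set T} | #|J| == k)
      (1 + u) ^+ #|I :&: J| = \sum_(S : {set T}) u ^+ #|S| * (M S * M S).
  under eq_bigr do rewrite sum_cond.
  rewrite sum_cond.
  transitivity (\sum_(I : {set T}) \sum_(J : {set T}) \sum_(S : {set T})
     ((#|I| == k) && (S \subset I))%:R * ((#|J| == k) && (S \subset J))%:R
       * u ^+ #|S|).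
    apply: eq_bigr => I _; rewrite big_distrr; apply: eq_bigr => J _ /=.
    rewrite -sum_sub_pow sum_cond big_distrr big_distrr; apply: eq_bigr => S _ /=.
    by rewrite finset.subsetI !natr_andb; ring.
  rewrite exchange_big; under eq_bigr do rewrite exchange_big.
  rewrite exchange_big; apply: eq_bigr => S _.
  rewrite /M big_distrl big_distrr /=; apply: eq_bigr => I _.
  rewrite big_distrr big_distrr /=; apply: eq_bigr => J _ /=.
  ring.
rewrite step1.
apply: (@le_trans _ _ (\sum_(S : {set T}) (u * z) ^+ #|S| * C * M S)).
  apply: ler_sum => S _.
  rewrite exprMn -!mulrA ler_wpM2l ?exprn_ge0 // mulrC [_ * (C * _)]mulrC.
  by rewrite mulrAC ler_wpM2r // mulrC hM.
have step2 : \sum_(S : {set T}) (u * z) ^+ #|S| * M S = C * (1 + u * z) ^+ k.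
  transitivity (\sum_(I : {set T}) (#|I| == k)%:R *
       \sum_(S : {set T} | S \subset I) (u * z) ^+ #|S|); last first.
    rewrite -hC big_distrl /=; apply: eq_bigr => I _; rewrite sum_sub_pow.
    by case: eqP => [->|]; rewrite ?mul0r ?mul1r.
  under [RHS]eq_bigr do rewrite sum_cond big_distrr.
  rewrite exchange_big; apply: eq_bigr => S _ /=.
  rewrite /M big_distrr /=; apply: eq_bigr => I _ /=.
  by rewrite natr_andb; ring.
have -> : \sum_(S : {set T}) (u * z) ^+ #|S| * C * M S =
    C * \sum_(S : {set T}) (u * z) ^+ #|S| * M S.
  by rewrite big_distrr; apply: eq_bigr => S _ /=; ring.
by rewrite step2 mulrA expr2.
Qed.

End C.

Section Main.
Context {R : realType}.
Variables (n k : nat) (mu' delta : R).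

Definition sel (I : {set 'I_n}) (i : nat) : bool := [exists o in I, val o == i].

Lemma selE I (o : 'I_n) : sel I o = (o \in I).
Proof.
apply/idP/idP => [H | Io]; last by apply/existsP; exists o; rewrite Io eqxx.
case/existsP: H => o2 /andP [Io2 /eqP e].
by have -> : o = o2 by apply: val_inj.
Qed.

Definition cc : R := mu' + (k%:R / n%:R) * delta.
Definition aI (I : {set 'I_n}) (i : nat) : R := mu' + delta * (sel I i)%:R.
Definition CC : R := 'C(n, k)%:R.

Definition Jt := (({set 'I_n} * {set 'I_n}) + ({set 'I_n} * bool))%type.

Definition kap (j : Jt) : R :=
  match j with
  | inl (A1, B1) => CC^-2 * (#|A1| == k)%:R * (#|B1| == k)%:R
  | inr (A1, true) => - 2 * CC^-1 * (#|A1| == k)%:R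
  | inr (A1, false) => CC^-1 * (#|A1| == k)%:R
  end.

Definition fa (j : Jt) : nat -> R :=
  match j with
  | inl (A1, B1) => aI A1
  | inr (A1, true) => aI A1
  | inr (A1, false) => fun _ => cc
  end.

Definition fb (j : Jt) : nat -> R :=
  match j with
  | inl (A1, B1) => aI B1
  | inr _ => fun _ => cc
  end.

Lemma sum_pair (A B : finType) (F : A * B -> R) :
  \sum_(p : A * B) F p = \sum_(a : A) \sum_(b : B) F (a, b).
Proof. by rewrite pair_bigA; apply: eq_bigr => -[a b]. Qed.

Hypothesis hkn : (k <= n)%N.

Lemma CC_neq0 : CC != 0.
Proof. by rewrite /CC pnatr_eq0 -lt0n bin_gt0. Qed.

Lemma sumk : \sum_(I : {set 'I_n}) ((#|I| == k)%:R : R) = CC.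
Proof. by rewrite sum_ind_card card_draws card_ord. Qed.

Lemma chi_integrand (x : nat -> R) :
  (planted_pdf n k mu' delta x / gauss_prod_pdf n cc x - 1) ^+ 2 =
  \sum_(j : Jt) kap j *
     \prod_(i < n) (ell (fa j i) cc (x i) * ell (fb j i) cc (x i)).
Proof.
pose L I := \prod_(i < n) ell (aI I i) cc (x i).
set s1 := \sum_(I : {set 'I_n}) (#|I| == k)%:R * L I.
have ratio : planted_pdf n k mu' delta x / gauss_prod_pdf n cc x = CC^-1 * s1.
  rewrite /planted_pdf /gauss_prod_pdf -mulrA mulr_suml /s1 sum_cond.
  congr (_ * _); apply: eq_bigr => I _; rewrite -prodf_div.
  congr (_ * _); apply: eq_bigr => i _; by rewrite /ell /aI selE.
rewrite ratio big_sumType sum_pair [X in _ = _ + X]sum_pair /=.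
have e1 : forall I J : {set 'I_n},
   kap (inl (I, J)) * \prod_(i < n) (ell (fa (inl (I, J)) i) cc (x i) *
       ell (fb (inl (I, J)) i) cc (x i)) =
   CC^-2 * (((#|I| == k)%:R * L I) * ((#|J| == k)%:R * L J)).
  by move=> I J; rewrite /= big_split /= -/(L I) -/(L J); ring.
under eq_bigr do under eq_bigr do rewrite e1.
have e2 : forall I : {set 'I_n}, \sum_(b : bool)
   kap (inr (I, b)) * \prod_(i < n) (ell (fa (inr (I, b)) i) cc (x i) *
       ell (fb (inr (I, b)) i) cc (x i)) =
   - 2 * CC^-1 * ((#|I| == k)%:R * L I) + CC^-1 * (#|I| == k)%:R.
  move=> I; rewrite big_bool /=.
  under eq_bigr do rewrite ellcc mulr1.
  under [X in _ + _ * X = _]eq_bigr do rewrite ellcc mulr1.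
  by rewrite big1_eq /L; ring.
under [X in _ = _ + X]eq_bigr do rewrite e2.
rewrite big_split /= -!big_distrr /= sumk -/s1.
under eq_bigr do rewrite -big_distrr /= -big_distrr /= -/s1.
rewrite -big_distrr /= -big_distrl /= -/s1.
have := CC_neq0; move: (CC) => C C0.
by field.
Qed.


Lemma sum_sel (I : {set 'I_n}) : \sum_(i < n) ((sel I i)%:R : R) = #|I|%:R.
Proof.
under eq_bigr do rewrite selE.
by rewrite sum_ind_card; congr (_%:R); apply: eq_card => i; rewrite inE.
Qed.

Lemma sum_sel2 (I J : {set 'I_n}) :
  \sum_(i < n) ((sel I i)%:R * (sel J i)%:R : R) = #|I :&: J|%:R.
Proof.
under eq_bigr do rewrite !selE -natr_andb.
by rewrite sum_ind_card; congr (_%:R); apply: eq_card => i; rewrite !inE.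
Qed.

Hypothesis hk1 : (1 <= k)%N.

Lemma prod_exp (I J : {set 'I_n}) : #|I| = k -> #|J| = k ->
  \prod_(i < n) expR ((aI I i - cc) * (aI J i - cc)) =
  expR (- (delta ^+ 2 * k%:R ^+ 2 / n%:R)) * expR (delta ^+ 2) ^+ #|I :&: J|.
Proof.
move=> hI hJ.
have n0 : (n%:R : R) != 0 by rewrite pnatr_eq0 -lt0n; apply: leq_trans hkn.
rewrite -expR_sum -expRM_natl -expRD; congr expR.
pose z : R := k%:R / n%:R.
transitivity (\sum_(i < n) (delta ^+ 2 * ((sel I i)%:R * (sel J i)%:R) +
   ((- (z * delta ^+ 2)) * (sel I i)%:R +
   ((- (z * delta ^+ 2)) * (sel J i)%:R + z ^+ 2 * delta ^+ 2)))).
  by apply: eq_bigr => i _; rewrite /aI /cc /z; ring.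
rewrite !big_split /= -!big_distrr /= sum_sel2 !sum_sel sumr_const card_ord hI hJ.
by rewrite /z; field.
Qed.

Lemma value_eq :
  \sum_(j : Jt) kap j * \prod_(i < n) expR ((fa j i - cc) * (fb j i - cc)) =
  expR (- (delta ^+ 2 * k%:R ^+ 2 / n%:R)) * CC^-2 *
    \sum_(I : {set 'I_n} | #|I| == k) \sum_(J : {set 'I_n} | #|J| == k)
      (1 + (expR (delta ^+ 2) - 1)) ^+ #|I :&: J| - 1.
Proof.
rewrite big_sumType sum_pair [X in _ + X = _]sum_pair /=.
have e2 : forall I : {set 'I_n}, \sum_(b : bool)
   kap (inr (I, b)) * \prod_(i < n) expR ((fa (inr (I, b)) i - cc) *
       (fb (inr (I, b)) i - cc)) = - (CC^-1 * (#|I| == k)%:R).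
  move=> I; rewrite big_bool /=.
  have h1 (f : nat -> R) : \prod_(i < n) expR ((f i - cc) * (cc - cc)) = 1.
    by apply: big1 => i _; rewrite subrr mulr0 expR0.
  rewrite (h1 (aI I)) (h1 (fun _ => cc)); ring.
under [X in _ + X = _]eq_bigr do rewrite e2.
rewrite sumrN -big_distrr /= sumk mulVf ?CC_neq0 //; congr (_ - _).
have -> : 1 + (expR (delta ^+ 2) - 1) = expR (delta ^+ 2) by ring.
set E := expR (- (delta ^+ 2 * k%:R ^+ 2 / n%:R)).
transitivity (\sum_(I : {set 'I_n}) \sum_(J : {set 'I_n})
   (#|I| == k)%:R * ((#|J| == k)%:R * (E * CC^-2 * expR (delta ^+ 2) ^+ #|I :&: J|))).
  apply: eq_bigr => I _; apply: eq_bigr => J _.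
  case: eqP => hI; last by rewrite /=; ring.
  case: eqP => hJ; last by rewrite /=; ring.
  by rewrite /= prod_exp // -/E; ring.
rewrite [RHS]big_distrr /= [RHS]sum_cond; apply: eq_bigr => I _.
by rewrite [in RHS]sum_cond !big_distrr /=; apply: eq_bigr => J _; ring.
Qed.

End Main.

Theorem lemmaG1 (R : realType) (n k : nat) (mu' delta : R) :
  (1 <= k)%N -> (k <= n)%N -> 0 <= delta ->
  (chi2_gauss_prod n (planted_pdf n k mu' delta)
       (mu' + (k%:R / n%:R) * delta)
   <= (expR ((k%:R ^+ 2 / n%:R) * (expR (delta ^+ 2) - 1 - delta ^+ 2)) - 1)%:E)%E.
Proof.
move=> hk1 hkn _.
rewrite /chi2_gauss_prod -/(cc n k mu' delta).
rewrite (@gpe_ext R _ _ _ (fun x => (\sum_(j : Jt n) kap n k j *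
     \prod_(i < n) (ell (fa n k mu' delta j i) (cc n k mu' delta) (x i) *
        ell (fb n k mu' delta j i) (cc n k mu' delta) (x i)))%:E)); last first.
  by move=> x; rewrite chi_integrand.
rewrite gpe_comb value_eq // lee_fin lerD2r.
set E := expR _; set C := CC n k; set u := expR (delta ^+ 2) - 1.
have u0 : 0 <= u.
  have h := expR_ge1Dx (delta ^+ 2); have d0 := sqr_ge0 delta; rewrite /u; lra.
have hk' : (k <= #|'I_n|)%N by rewrite card_ord.
have hS := @overlap_bound R ('I_n) k u hk' u0.
rewrite card_ord -/C in hS.
have n0 : (0 : R) < n%:R by rewrite ltr0n; exact: leq_trans hkn.
have C0 : 0 < C by rewrite /C /CC ltr0n bin_gt0.
set z := k%:R / n%:R in hS.
have z0 : 0 <= z by rewrite /z divr_ge0.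
apply: (@le_trans _ _ (E / C ^+ 2 * (C ^+ 2 * (1 + u * z) ^+ k))).
  by rewrite ler_wpM2l // divr_ge0 ?expR_ge0 // exprn_ge0 // ltW.
rewrite mulrA divfK ?expf_neq0 ?gt_eqF //.
apply: (@le_trans _ _ (E * expR (u * z) ^+ k)).
  rewrite ler_wpM2l ?expR_ge0 //; apply: lerXn2r; rewrite ?nnegrE ?expR_ge0 //.
    by rewrite addr_ge0 // mulr_ge0.
  exact: expR_ge1Dx.
rewrite -expRM_natl -expRD /E /z le_eqVlt; apply/orP; left; apply/eqP; congr expR.
by field; rewrite gt_eqF.
Qed.
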